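(* Let $K_{m_1,m_2}$ be the complete bipartite graph with bipartition $(X,Y)$, $X=\{x_1,\dots,x_{m_1}\}$, $Y=\{y_1,\dots,y_{m_2}\}$, where $2\le m_1\le m_2$. Let $s$ and $i$ be integers with $\max\{1,s-m_2\}\le i\le \min\{m_1,s-1\}$ and $s\ge m_2-m_1+3$, and let $S_i=\{x_1,\dots,x_i,y_1,\dots,y_{s-i}\}$. If $2\le 2i\le m_1+s-m_2$, then $$\kappa^*_{K_{m_1,m_2}}(S_i)\ge\begin{cases} m_1-i, & \text{if } 2\le 2i\le \frac{2(m_1+s-m_2)}{3},\\[2pt] m_2-(s-i)+\left\lfloor\frac{m_1+s-m_2-i}{2}\right\rfloor, & \text{if } \frac{2(m_1+s-m_2)}{3}<2i\le m_1+s-m_2.\end{cases}$$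
   Context: For $S\subseteq V(G)$ with $|S|\ge 2$, an $S$-Steiner tree of $G$ is a subtree $T$ of $G$ with $S\subseteq V(T)$ all of whose leaves belong to $S$. A family of $S$-Steiner trees $T_1,\dots,T_k$ is completely independent if for all $1\le p<q\le k$: $E(T_p)\cap E(T_q)=\emptyset$, $V(T_p)\cap V(T_q)=S$, and for any two vertices $x_1,x_2\in S$ the $(x_1,x_2)$-paths in $T_p$ and in $T_q$ are internally disjoint. $\kappa^*_G(S)$ is the maximum number of trees in a completely independent family of $S$-Steiner trees in $G$. *)

(* Defs.v *)
From Stdlib Require Import ClassicalEpsilon.
From mathcomp Require Import all_boot.
Set Implicit Arguments. Unset Strict Implicit. Unset Printing Implicit Defensive.

Section SteinerDefs.
Variable T : finType.
Variable e : rel T.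

Definition gedges : {set {set T}} :=
  [set f : {set T} | [exists x, exists y, e x y && (f == [set x; y])]].

Definition adjE (E : {set {set T}}) : rel T := fun a b => [set a; b] \in E.

Definition gpath (E : {set {set T}}) (x y : T) (p : seq T) : bool :=
  [&& path (adjE E) x p, last x p == y & uniq (x :: p)].

Definition interior (x y : T) (p : seq T) : {set T} :=
  [set v | (v \in p) && (v != x) && (v != y)].

Definition degE (E : {set {set T}}) (v : T) : nat := #|[set f in E | v \in f]|.

Definition is_subtree (V : {set T}) (E : {set {set T}}) : Prop :=
  [/\ V != set0,
      E \subset gedges,
      (forall f, f \in E -> f \subset V),
      (forall x y, x \in V -> y \in V -> exists p, gpath E x y p) &
      (forall c : seq T, uniq c -> 3 <= size c -> ~~ cycle (adjE E) c)].

Definition steiner_tree (S : {set T}) (V : {set T}) (E : {set {set T}}) : Prop :=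
  [/\ is_subtree V E, S \subset V &
      (forall v, v \in V -> degE E v = 1 -> v \in S)].

Definition CI_family (S : {set T}) (k : nat)
    (F : 'I_k -> {set T} * {set {set T}}) : Prop :=
  (forall j, steiner_tree S (F j).1 (F j).2) /\
  (forall p q : 'I_k, p != q ->
     [/\ (F p).2 :&: (F q).2 = set0,
         (F p).1 :&: (F q).1 = S &
         (forall x1 x2 P Q, x1 \in S -> x2 \in S ->
            gpath (F p).2 x1 x2 P -> gpath (F q).2 x1 x2 Q ->
            [disjoint interior x1 x2 P & interior x1 x2 Q])]).

Definition has_CI_family (S : {set T}) (k : nat) : Prop :=
  exists F : 'I_k -> {set T} * {set {set T}}, CI_family S F.

Definition decP (P : Prop) : bool :=
  if excluded_middle_informative P then true else false.

(* For |S| >= 2 every such tree has an edge and the trees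
   are edge-disjoint, so the size is at most #|gedges| <= #|T|^2; the range
   below therefore contains every possible size. *)
Definition kappa_star (S : {set T}) : nat :=
  \max_(k < (#|T| ^ 2).+2 | decP (has_CI_family S k)) k.

End SteinerDefs.

(* complete bipartite graph K_{m1,m2}: X = 'I_m1 (inl), Y = 'I_m2 (inr) *)
Definition Kvert (m1 m2 : nat) : finType := ('I_m1 + 'I_m2)%type.

Definition Kadj (m1 m2 : nat) : rel (Kvert m1 m2) := fun u v =>
  match u, v with
  | inl _, inr _ => true
  | inr _, inl _ => true
  | _, _ => false
  end.

(* S_i = {x_1..x_i, y_1..y_(s-i)} (0-indexed: x_a with a < i, y_b with b < s-i) *)
Definition S_i (m1 m2 s i : nat) : {set Kvert m1 m2} :=
  [set v : Kvert m1 m2 | match v with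
                         | inl a => (a < i)%N
                         | inr b => (b < s - i)%N
                         end].

(* Main.v *)
Require Import Defs.
From mathcomp Require Import all_boot.
From mathcomp Require Import zify.
From Stdlib Require Import ClassicalEpsilon.
Set Implicit Arguments. Unset Strict Implicit. Unset Printing Implicit Defensive.

Lemma set2_eq (T : finType) (a b c d : T) :
  [set a; b] = [set c; d] -> (a = c /\ b = d) \/ (a = d /\ b = c).
Proof.
move=> E.
have ha : a \in [set c; d] by rewrite -E set21.
have hb : b \in [set c; d] by rewrite -E set22.
have hc : c \in [set a; b] by rewrite E set21.
have hd : d \in [set a; b] by rewrite E set22.
case/set2P: ha => ha; case/set2P: hb => hb; case/set2P: hc => hc;
  case/set2P: hd => hd; subst; auto.
Qed.

Lemma exists_max (T : eqType) (f : T -> nat) (s : seq T) : s != [::] ->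
  exists2 z, z \in s & forall w, w \in s -> f w <= f z.
Proof.
elim: s => [//|x s IH] _.
case: (eqVneq s [::]) => [->|sn].
  by exists x; [rewrite mem_head | move=> w; rewrite inE => /eqP->].
have [z zs zm] := IH sn.
case: (leqP (f x) (f z)) => h.
  exists z; first by rewrite inE zs orbT.
  by move=> w; rewrite inE => /orP[/eqP->//|]; exact: zm.
exists x; first exact: mem_head.
move=> w; rewrite inE => /orP[/eqP->//|/zm]; lia.
Qed.

Lemma interior_nb (T : finType) (E : {set {set T}}) x y p w :
  gpath E x y p -> w \in interior x y p ->
  exists n1 n2, [/\ adjE E n1 w, adjE E w n2 & n1 != n2].
Proof.
case/and3P => pth /eqP ly up; rewrite inE => /andP[/andP[wp _] wy].
move: pth ly up; case/splitPr: wp => p1 p2.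
case: p2 => [|n2 p3] pth ly up.
  by rewrite last_cat /= in ly; rewrite ly eqxx in wy.
rewrite cat_path /= in pth; case/and4P: pth => _ a1 a2 _.
exists (last x p1), n2; split => //.
apply/eqP => E1.
rewrite -cat_cons cat_uniq in up; case/and3P: up => _ /hasP[]; exists n2.
  by rewrite !inE eqxx orbT.
by rewrite -E1 mem_last.
Qed.

Lemma kappa_ge (T : finType) (e : rel T) S k : k < (#|T|^2).+2 ->
  has_CI_family e S k -> k <= kappa_star e S.
Proof.
move=> kl h; rewrite /kappa_star.
have hP : Defs.decP (has_CI_family e S (Ordinal kl)).
  by rewrite /Defs.decP; case: excluded_middle_informative.
have H := @leq_bigmax_cond _ (fun i : 'I_(#|T|^2).+2 => Defs.decP (has_CI_family e S i)) (fun i : 'I_(#|T|^2).+2 => nat_of_ord i) (Ordinal kl) hP.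
exact: H.
Qed.

Lemma eq_inord n (x : 'I_n.+1) a : a < n.+1 -> (x == inord a) = (nat_of_ord x == a).
Proof. by move=> h; rewrite -(inj_eq val_inj) /= inordK. Qed.
Lemma inl_eqE (A B : eqType) (x y : A) : (inl x == inl y :> A + B) = (x == y).
Proof. by apply/eqP/eqP => [[]|->]. Qed.
Lemma inr_eqE (A B : eqType) (x y : B) : (inr x == inr y :> A + B) = (x == y).
Proof. by apply/eqP/eqP => [[]|->]. Qed.
Lemma inlr_eqE (A B : eqType) (x : A) (y : B) : (inl x == inr y :> A + B) = false.
Proof. by []. Qed.
Lemma inrl_eqE (A B : eqType) (x : A) (y : B) : (inr y == inl x :> A + B) = false.
Proof. by []. Qed.

Lemma eq_inord' n (x : 'I_n.+1) a : a < n.+1 -> (inord a == x) = (a == nat_of_ord x).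
Proof. by move=> h; rewrite -(inj_eq val_inj) /= inordK. Qed.

Section Generic.
Variables (T : finType) (e : rel T) (S : {set T}) (k : nat).
Variables (vown iown : T -> nat) (own : T -> T -> nat) (root : nat -> T)
  (par : nat -> T -> T) (dep : nat -> T -> nat).

Definition Vt j := S :|: [set v | vown v == j].
Definition Et j := [set [set v; par j v] | v in Vt j :\ root j].
Definition child j v u := [/\ u \in Vt j, u != root j & par j u = v].

Hypothesis own_sym : forall u v, own u v = own v u.
Hypothesis Hroot : forall j, j < k -> root j \in Vt j.
Hypothesis Hpar : forall j, j < k -> forall v, v \in Vt j -> v != root j ->
  [/\ par j v \in Vt j, dep j (par j v) < dep j v, e v (par j v) & own v (par j v) = j].
Hypothesis Hdeg : forall j, j < k -> forall v, v \in Vt j -> v \notin S ->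
  exists2 u1, child j v u1 & (v != root j \/ exists2 u2, child j v u2 & u2 != u1).
Hypothesis Hleaf : forall j, j < k -> forall v, v \in S ->
  (v = root j \/ exists u, child j v u) -> iown v = j.

Section OneTree.
Variable j : nat.
Hypothesis jk : j < k.

Lemma Et_inv f : f \in Et j ->
  exists v, [/\ v \in Vt j, v != root j & f = [set v; par j v]].
Proof. by case/imsetP => v; rewrite in_setD1 => /andP[vr vV] ->; exists v. Qed.

Lemma mem_edge v : v \in Vt j -> v != root j -> [set v; par j v] \in Et j.
Proof. by move=> vV vr; apply/imsetP; exists v => //; rewrite in_setD1 vr. Qed.

Lemma adj_inv x y : adjE (Et j) x y ->
  (x != root j /\ y = par j x /\ x \in Vt j) \/
  (y != root j /\ x = par j y /\ y \in Vt j).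
Proof.
rewrite /adjE => /Et_inv [v [vV vr /set2_eq [[-> ->]|[-> ->]]]]; by [left|right].
Qed.

Lemma adj_sym : symmetric (adjE (Et j)).
Proof. by move=> x y; rewrite /adjE setUC. Qed.

Lemma par_neq v : v \in Vt j -> v != root j -> par j v != v.
Proof.
move=> vV vr; have [_ d _ _] := Hpar jk vV vr.
by apply/eqP => E; rewrite E ltnn in d.
Qed.

Lemma conn_root v : v \in Vt j -> connect (adjE (Et j)) v (root j).
Proof.
move: {2}(dep j v).+1 (ltnSn (dep j v)) => n; elim: n v => [//|n IH] v ltv vV.
case: (eqVneq v (root j)) => [->|vr]; first exact: connect0.
have [pV pd _ _] := Hpar jk vV vr.
apply: connect_trans (IH _ _ pV); first by apply: connect1; exact: mem_edge.
exact: leq_trans pd ltv.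
Qed.

Lemma acyc c : uniq c -> 3 <= size c -> ~~ cycle (adjE (Et j)) c.
Proof.
move=> uc sc; apply/negP => cyc.
have [z zc zmax] : exists2 z, z \in c & forall w, w \in c -> dep j w <= dep j z.
  by apply: exists_max; case: c sc {uc cyc}.
case: (rot_to zc) => i s' Hrot.
have cyc' : cycle (adjE (Et j)) (z :: s') by rewrite -Hrot rot_cycle.
have uc' : uniq (z :: s') by rewrite -Hrot rot_uniq.
have sz : 2 <= size s'.
  by have := size_rot i c; rewrite Hrot /= => E; rewrite -ltnS E.
have ins w : w \in s' -> w \in c.
  by move=> ws; rewrite -(mem_rot i) Hrot inE ws orbT.
have key w : adjE (Et j) z w -> w \in c -> w = par j z.
  case/adj_inv => [[_ [-> _]] // | [wr [zp wV]]] wc.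
  have [_ pd _ _] := Hpar jk wV wr; rewrite -zp in pd.
  by have := zmax w wc; lia.
move: cyc' uc' sz ins; case: s' {Hrot} => [|n1 [|y r]] //= /andP[a1].
rewrite rcons_path => /andP[_ /andP[_ a2]] /andP[_ /andP[n1r _]] _ ins.
have e1 := key _ a1 (ins _ (mem_head _ _)).
have e2 : last y r = par j z.
  apply: key; first by rewrite adj_sym.
  by apply: ins; rewrite in_cons mem_last orbT.
by move: n1r; rewrite e1 -e2 mem_last.
Qed.

Lemma subtree : is_subtree e (Vt j) (Et j).
Proof.
split.
- by apply/set0Pn; exists (root j); exact: Hroot.
- apply/subsetP => f /Et_inv [v [vV vr ->]]; rewrite inE.
  apply/existsP; exists v; apply/existsP; exists (par j v).
  by have [_ _ -> _] := Hpar jk vV vr; rewrite eqxx.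
- move=> f /Et_inv [v [vV vr ->]]; apply/subsetP => x /set2P [->|->] //.
  by have [-> _ _ _] := Hpar jk vV vr.
- move=> x y xV yV.
  have cxy : connect (adjE (Et j)) x y.
    apply: connect_trans (conn_root xV) _.
    by rewrite (sym_connect_sym adj_sym); exact: conn_root.
  case/connectP: cxy => p pth ->.
  case: (shortenP pth) => p' pth' up' _.
  by exists p'; rewrite /gpath pth' eqxx up'.
- by move=> c uc sc; exact: acyc.
Qed.

Lemma deg2 v f1 f2 : f1 \in Et j -> f2 \in Et j -> v \in f1 -> v \in f2 ->
  f1 != f2 -> 2 <= degE (Et j) v.
Proof.
move=> h1 h2 v1 v2 f12; rewrite /degE.
have : [set f1; f2] \subset [set f in Et j | v \in f].
  by apply/subsetP => f /set2P [->|->]; rewrite inE ?h1 ?h2 ?v1 ?v2.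
by move/subset_leq_card; rewrite cards2 f12.
Qed.

Lemma nonS_deg v : v \in Vt j -> v \notin S -> 2 <= degE (Et j) v.
Proof.
move=> vV vS; have [u1 [u1V u1r pu1] rest] := Hdeg jk vV vS.
have f1E := mem_edge u1V u1r.
have vf1 : v \in [set u1; par j u1] by rewrite pu1 set22.
case: rest => [vr | [u2 [u2V u2r pu2] u21]].
  apply: (deg2 f1E (mem_edge vV vr) vf1 (set21 _ _)).
  apply/eqP => /set2_eq [[E1 E2]|[E1 E2]].
    by have := par_neq vV vr; rewrite -E2 pu1 eqxx.
  have [_ d1 _ _] := Hpar jk u1V u1r; have [_ d2 _ _] := Hpar jk vV vr.
  by move: d1 d2; rewrite pu1 -E1; lia.
apply: (deg2 f1E (mem_edge u2V u2r) vf1); first by rewrite pu2 set22.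
apply/eqP => /set2_eq [[E1 E2]|[E1 E2]]; first by rewrite E1 eqxx in u21.
have [_ d1 _ _] := Hpar jk u1V u1r; have [_ d2 _ _] := Hpar jk u2V u2r.
by move: d1 d2; rewrite E2 E1 pu2; lia.
Qed.

Lemma steiner : steiner_tree e S (Vt j) (Et j).
Proof.
split; [exact: subtree | exact: subsetUl |].
move=> v vV d1; apply/negPn/negP => vS.
by have := nonS_deg vV vS; rewrite d1.
Qed.

Lemma nonleaf w n1 n2 : adjE (Et j) w n1 -> adjE (Et j) w n2 -> n1 != n2 ->
  w \in Vt j /\ exists u, child j w u.
Proof.
move=> /adj_inv [[wr [E1 wV]]|[n1r [E1 n1V]]] /adj_inv
  [[_ [E2 wV']]|[n2r [E2 n2V]]] n12.
- by rewrite E1 E2 eqxx in n12.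
- by split => //; exists n2; split.
- by split => //; exists n1; split.
- split; last by exists n1; split.
  by rewrite E1; have [-> _ _ _] := Hpar jk n1V n1r.
Qed.

End OneTree.

Lemma generic_CI : has_CI_family e S k.
Proof.
exists (fun jj : 'I_k => (Vt jj, Et jj)); split.
  by move=> jj; exact: steiner (ltn_ord jj).
move=> p q pq; have pq' : nat_of_ord p != q by [].
split => /=.
- apply/setP => f; rewrite !inE; apply/negbTE/negP => /andP[fp fq].
  have [v [vV vr E1]] := Et_inv fp; have [u [uV ur E2]] := Et_inv fq.
  have [_ _ _ o1] := Hpar (ltn_ord p) vV vr.
  have [_ _ _ o2] := Hpar (ltn_ord q) uV ur.
  move: E2; rewrite E1 => /set2_eq [[F1 F2]|[F1 F2]].
    by move: o1 o2; rewrite F2 F1 => -> E; rewrite E eqxx in pq'.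
  by move: o1 o2; rewrite F2 F1 own_sym => -> E; rewrite E eqxx in pq'.
- apply/setP => v; rewrite !inE; case: (v \in S) => //=.
  by apply/negbTE; apply/negP => /andP[/eqP -> /eqP E]; rewrite E eqxx in pq'.
- move=> x1 x2 P Q _ _ gP gQ; apply/pred0P => w /=; apply/negbTE/negP => /andP[wP wQ].
  have [a1 [a2 [h1 h2 a12]]] := interior_nb gP wP.
  have [b1 [b2 [g1 g2 b12]]] := interior_nb gQ wQ.
  rewrite adj_sym in h1; rewrite adj_sym in g1.
  have [wVp cp] := nonleaf (ltn_ord p) h1 h2 a12.
  have [wVq cq] := nonleaf (ltn_ord q) g1 g2 b12.
  have wS : w \in S.
    move: wVp wVq; rewrite !inE; case: (w \in S) => //= /eqP -> /eqP E.
    by rewrite E eqxx in pq'.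
  have := Hleaf (ltn_ord p) wS (or_intror cp).
  have := Hleaf (ltn_ord q) wS (or_intror cq).
  by move=> -> E; rewrite E eqxx in pq'.
Qed.

End Generic.

Lemma inl_inord n (B : Type) (x : 'I_n.+1) a : a < n.+1 ->
  (inl x : 'I_n.+1 + B) = inl (inord a) -> nat_of_ord x = a.
Proof. by move=> h [->]; rewrite inordK. Qed.
Lemma inr_inord n (A : Type) (x : 'I_n.+1) a : a < n.+1 ->
  (inr x : A + 'I_n.+1) = inr (inord a) -> nat_of_ord x = a.
Proof. by move=> h [->]; rewrite inordK. Qed.


Section Case1.
Variables n1 n2 s i : nat.
Hypotheses (h1 : 1 <= i) (h2 : s <= n2.+1 + i) (h3 : i <= n1.+1) (h4 : i + 1 <= s)
  (h5 : n1.+1 <= n2.+1) (h6 : n2.+1 + 3 <= n1.+1 + s) (h7 : 3 * i + n2.+1 <= n1.+1 + s).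
Local Notation t := (s - i).
Local Notation B := (n2.+1 - (s - i)).
Local Notation A := (n1.+1 - i).
Local Notation TT := (Kvert n1.+1 n2.+1).

Definition XV (a : nat) : TT := inl (inord a).
Definition YV (b : nat) : TT := inr (inord b).

Definition vown1 (v : TT) := match v with inl x => x - i | inr y => y - t end.
Definition iown1 (v : TT) := match v with inl _ => 0 | inr y => y + B end.
Definition O1 (a b : nat) := if i <= a then a - i else if t <= b then b - t else b + B.
Definition own1 (u v : TT) := match u, v with
  | inl x, inr y => O1 x y | inr y, inl x => O1 x y | _, _ => 0 end.
Definition root1 (j : nat) := XV (i + j).
Definition hub1 (j : nat) := if j < B then YV (t + j) else YV (j - B).
Definition par1 (j : nat) (v : TT) := match v with inl _ => hub1 j | inr _ => root1 j end.
Definition dep1 (j : nat) (v : TT) := match v with inl x => if x < i then 2 else 0 | inr _ => 1 end.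

Ltac simp := rewrite /Vt /S_i /XV /YV /root1 /par1 /dep1 /vown1 /iown1 /own1 /O1 /child ?inE /=.
Ltac arith := repeat (case: ifPn => ?); try lia.

Lemma case1 : has_CI_family (@Kadj n1.+1 n2.+1) (S_i n1.+1 n2.+1 s i) A.
Proof.
apply: (generic_CI (vown:=vown1) (iown:=iown1) (own:=own1) (root:=root1) (par:=par1) (dep:=dep1)).
- by move=> [x|y] [x'|y'].
- move=> j jA; simp; rewrite inordK; lia.
- move=> j jA [x|y]; simp.
  + have := ltn_ord x; rewrite inl_eqE eq_inord; last lia.
    move=> xn xV xr; rewrite /hub1; case: ifPn => jB; simp; split => //;
    rewrite ?inordK; arith.
  + have := ltn_ord y => yn yV _; split => //; rewrite ?inordK; arith.
- move=> j jA [x|y]; simp.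
  + move=> xV xS; have := ltn_ord x => xn.
    have vr : inl x = root1 j.
      by rewrite /root1 /XV; congr inl; apply: val_inj; rewrite /= inordK; lia.
    rewrite vr; exists (YV 0).
      simp; split; rewrite ?inordK //; lia.
    right; case: (ltnP j B) => jB.
      exists (YV (t + j)); simp; rewrite /hub1 ?inr_eqE ?eq_inord; try split; rewrite ?inordK //; lia.
    exists (YV 1); simp; rewrite /hub1 ?inr_eqE ?eq_inord; try split; rewrite ?inordK //; lia.
  + move=> yV yS; have := ltn_ord y => yn.
    exists (XV 0); last by left.
    simp; split; rewrite ?inordK //; try lia.
      by rewrite inl_eqE eq_inord ?inordK; lia.
    rewrite /hub1; case: ifPn => jB; last lia.
    rewrite /YV; congr inr; apply: val_inj; rewrite /= inordK; lia.
- move=> j jA [x|y]; simp.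
  + move=> xS [vr|[u [uV ur pu]]].
      by move: vr; rewrite /root1 /XV => /inl_inord; lia.
    move: pu; case: u uV ur => [x'|y'] /= uV ur; rewrite /hub1 /YV /root1 /XV.
      by case: ifP.
    by move=> /esym /inl_inord; lia.
  + move=> yS [vr|[u [uV ur pu]]] //.
    move: pu; case: u uV ur => [x'|y'] /= uV ur; rewrite /hub1 /YV /root1 /XV //.
    by case: ifPn => jB /esym /inr_inord; lia.
Qed.
End Case1.

Section Case2.
Variables n1 n2 s i : nat.
Hypotheses (h1 : 1 <= i) (h2 : s <= n2.+1 + i) (h3 : i <= n1.+1) (h4 : i + 1 <= s)
  (h5 : n1.+1 <= n2.+1) (h6 : n2.+1 + 3 <= n1.+1 + s) (h7 : n1.+1 + s < 3 * i + n2.+1)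
  (h8 : 2 * i + n2.+1 <= n1.+1 + s).
Local Notation t := (s - i).
Local Notation B := (n2.+1 - (s - i)).
Local Notation A := (n1.+1 - i).
Local Notation K := ((n1.+1 - (n2.+1 - (s - i))) %/ 2).
Local Notation D := (n1.+1 - i - (n2.+1 - (s - i))).
Local Notation TT := (Kvert n1.+1 n2.+1).

Definition XV2 (a : nat) : TT := inl (inord a).
Definition YV2 (b : nat) : TT := inr (inord b).

Definition vown2 (v : TT) := match v with inl x => x - i | inr y => y - t end.
Definition iown2 (v : TT) := match v with
  | inl x => if x < K then B + x else B + (x - K + D)
  | inr y => if y < K then B + y else B + (y - K) end.
Definition O2 (a b : nat) :=
  if i <= a then a - i else if t <= b then b - t else
  if a < K then (if b < K then B + a else B + (b - K))
  else (if b < K then B + b else B + (a - K + D)).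
Definition own2 (u v : TT) := match u, v with
  | inl x, inr y => O2 x y | inr y, inl x => O2 x y | _, _ => 0 end.
Definition ridx (j : nat) := if (j < B) || (j - B < D) then i + j else K + (j - B) - D.
Definition root2 (j : nat) := XV2 (ridx j).
Definition par2 (j : nat) (v : TT) :=
  if j < B then (match v with inl _ => YV2 (t + j) | inr _ => root2 j end)
  else match v with
   | inr y => if (y < K) && (y != j - B :> nat) then XV2 (j - B) else root2 j
   | inl x => if x < K then YV2 (K + (j - B)) else YV2 (j - B) end.
Definition dep2 (j : nat) (v : TT) := match v with
  | inl x => if x == ridx j :> nat then 0 else 2
  | inr y => if j < B then 1 else if (y < K) && (y != j - B :> nat) then 3 else 1 end.

Ltac simp := rewrite /Vt /S_i /XV2 /YV2 /root2 /par2 /dep2 /vown2 /iown2 /own2 /O2 /ridx /child ?inE /=.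
Ltac arith := repeat (case: ifPn => ?); try lia.
Ltac norm := rewrite ?inl_eqE ?inr_eqE ?inlr_eqE ?inrl_eqE ?eq_inord ?eq_inord' ?inordK; try lia.
Ltac crush := repeat (case: ifPn => ?); simp; norm; try (split; norm).

Lemma Kfacts : 2 * K <= n1.+1 - B /\ n1.+1 - B <= 2 * K + 1.
Proof.
have := divn_eq (n1.+1 - B) 2; have := ltn_pmod (n1.+1 - B) (isT : 0 < 2); lia.
Qed.

Lemma case2 : has_CI_family (@Kadj n1.+1 n2.+1) (S_i n1.+1 n2.+1 s i) (B + K).
Proof.
have [hK1 hK2] := Kfacts.
apply: (generic_CI (vown:=vown2) (iown:=iown2) (own:=own2) (root:=root2) (par:=par2) (dep:=dep2)).
- by move=> [x|y] [x'|y'].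
- move=> j jk; simp; rewrite inordK; arith.
- move=> j jk [x|y]; [have := ltn_ord x | have := ltn_ord y] => xn;
  case jb: (j < B); case jd: (j - B < D); simp; rewrite ?jb ?jd /=; simp; rewrite ?jb ?jd /=.
  + move=> xV; norm => xr; split; norm; arith.
  + move=> xV; norm => xr; split; norm; arith.
  + move=> xV; norm => xr; case xk: (x < K); simp; split; norm; arith.
  + move=> xV; norm => xr; case xk: (x < K); simp; split; norm; arith.
  + move=> yV _; split; norm; arith.
  + move=> yV _; split; norm; arith.
  + move=> yV _; case yk: ((y < K) && (y != j - B :> nat)); simp; rewrite ?jd /=; split; norm; arith.
  + move=> yV _; case yk: ((y < K) && (y != j - B :> nat)); simp; rewrite ?jd /=; split; norm; arith.
- move=> j jk [x|y]; [have := ltn_ord x | have := ltn_ord y] => xn;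
  case jb: (j < B); case jd: (j - B < D); simp; rewrite ?jb ?jd /=; simp; rewrite ?jb ?jd /= => vV vS.
  + exists (YV2 0); simp; rewrite ?jb /=.
      by split; norm; apply/eqP; norm.
    right; exists (YV2 (t + j)); simp; rewrite ?jb /=; norm.
    by split; norm; apply/eqP; norm.
  + exists (YV2 0); simp; rewrite ?jb /=.
      by split; norm; apply/eqP; norm.
    right; exists (YV2 (t + j)); simp; rewrite ?jb /=; norm.
    by split; norm; apply/eqP; norm.
  + exists (YV2 (j - B)); simp; rewrite ?jb ?jd /=.
      by split; norm; rewrite ifF; [apply/eqP; norm | apply/negbTE; rewrite negb_and; norm].
    right; exists (YV2 (K + (j - B))); simp; rewrite ?jb ?jd /=; norm.
    by split; norm; rewrite ifF; [apply/eqP; norm | apply/negbTE; rewrite negb_and; norm].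
  + lia.
  + exists (XV2 0); simp; rewrite ?jb /=; last by left.
    by split; norm; apply/eqP; norm.
  + exists (XV2 0); simp; rewrite ?jb /=; last by left.
    by split; norm; apply/eqP; norm.
  + lia.
  + lia.
- move=> j jk [x|y]; [have := ltn_ord x | have := ltn_ord y] => xn;
  case jb: (j < B); case jd: (j - B < D); simp => vS H;
  (case: H => [/eqP vr | [[x'|y'] [uV ur /eqP pu]]]; [move: vr | move: pu | move: pu]);
  simp; rewrite ?jb ?jd /=; simp; rewrite ?jb ?jd /=;
  repeat (case: ifPn => ?); norm.
Qed.
End Case2.

Theorem theorem3p6 (m1 m2 s i : nat) :
  2 <= m1 -> m1 <= m2 ->
  1 <= i -> s <= m2 + i ->            (* max{1, s-m2} <= i *)
  i <= m1 -> i + 1 <= s ->            (* i <= min{m1, s-1} *)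
  m2 + 3 <= m1 + s ->                 (* s >= m2 - m1 + 3 *)
  2 <= 2 * i -> 2 * i + m2 <= m1 + s -> (* 2 <= 2i <= m1 + s - m2 *)
  (if 3 * i + m2 <= m1 + s            (* 2i <= 2(m1+s-m2)/3 *)
   then m1 - i
   else m2 - (s - i) + (m1 + s - m2 - i) %/ 2)
  <= kappa_star (@Kadj m1 m2) (S_i m1 m2 s i).
Proof.
move=> H1 H2 H3 H4 H5 H6 H7 H8 H9.
destruct m1 as [|n1]; first lia.
destruct m2 as [|n2]; first lia.
have cardT : #|Kvert n1.+1 n2.+1| = n1.+1 + n2.+1 by rewrite card_sum !card_ord.
have sq : n1.+1 + n2.+1 <= (n1.+1 + n2.+1) ^ 2 by rewrite expnS expn1; nia.
case: ifP => c.
  apply: kappa_ge; first by rewrite cardT; lia.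
  by apply: case1; lia.
have E : n2.+1 - (s - i) + (n1.+1 + s - n2.+1 - i) %/ 2 =
  n2.+1 - (s - i) + (n1.+1 - (n2.+1 - (s - i))) %/ 2.
  by congr (_ + _ %/ 2); lia.
rewrite E; apply: kappa_ge.
  rewrite cardT; have := leq_div (n1.+1 - (n2.+1 - (s - i))) 2; lia.
by apply: case2; lia.
Qed.
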